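(* Let $\tilde w:\mathcal D^n(\delta)\to\mathcal D^n(\delta)$ and let $C\subset\mathcal D^n(\delta)$ be nonempty and bounded with $\tilde w(C)\subset C$. Then the minimal absorbing set $\mathcal M[\tilde w,C]$ exists, i.e. the intersection of all absorbing sets for $\tilde w$ in $C$ is itself an absorbing set for $\tilde w$ in $C$.
   Context: $\mathcal D^n(\delta)=\{\delta m:m\in\mathbb Z^n\}\subset\mathbb R^n$ for fixed $\delta>0$. For a map $\tilde w$ and nonempty $C$ with $\tilde w(C)\subset C$, a set $\Lambda\subset C$ is an absorbing set for $\tilde w$ in $C$ if for every $\tilde x\in C$ there is $N\in\mathbb N$ with $\tilde w^{\circ i}(\tilde x)\in\Lambda$ for all $i\ge N$ (absorbing sets are nonempty). When the intersection of all absorbing sets in $C$ is absorbing in $C$, it is called the minimal absorbing set $\mathcal M[\tilde w,C]$. *)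

(* Defs.v *)
From mathcomp Require Import all_boot all_order all_algebra.
From mathcomp Require Import classical_sets reals.
Set Implicit Arguments. Unset Strict Implicit. Unset Printing Implicit Defensive.
Import Order.TTheory GRing.Theory Num.Theory.
Local Open Scope classical_set_scope.
Local Open Scope ring_scope.

Definition grid (R : realType) (n : nat) (delta : R) : set ('I_n -> R) :=
  [set x | exists m : 'I_n -> int, forall i, x i = delta * (m i)%:~R].

(* bounded subset of R^n (sup-norm bound; all norms equivalent) *)
Definition bounded_set (R : realType) (n : nat) (C : set ('I_n -> R)) : Prop :=
  exists M : R, forall x, C x -> forall i, `|x i| <= M.

Definition absorbing (T : Type) (w : T -> T) (C Lambda : set T) : Prop :=
  Lambda `<=` C /\ Lambda !=set0 /\
  forall x, C x -> exists N : nat, forall i : nat, (N <= i)%N -> Lambda (iter i w x).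

Definition absorbing_inter (T : Type) (w : T -> T) (C : set T) : set T :=
  [set x | forall Lambda, absorbing w C Lambda -> Lambda x].

(* Main.v *)
Require Import Defs.
From mathcomp Require Import all_boot all_order all_algebra.
From mathcomp Require Import boolp classical_sets reals.
From mathcomp Require Import zify.
Import Order.TTheory GRing.Theory Num.Theory.
Local Open Scope classical_set_scope.
Local Open Scope ring_scope.

Lemma pigeon (T : finType) (f : nat -> T) :
  exists i j, (i < j)%N /\ f i = f j.
Proof.
apply: contrapT => hno.
pose g : 'I_#|T|.+1 -> T := fun i => f i.
have ginj : injective g.
  move=> i j hij; apply/val_inj => /=.
  case: (ltngtP i j) => // h; exfalso; apply: hno.
  - by exists i, j.
  - by exists j, i.
by have := leq_card g ginj; rewrite card_ord ltnn.
Qed.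

Lemma iter_period (T : Type) (w : T -> T) y p :
  iter p w y = y -> forall k, iter (k * p) w y = y.
Proof.
move=> hp; elim=> [|k IH] //=.
by rewrite mulSn iterD IH hp.
Qed.

Definition code (R : realType) n (delta : R) (y : 'I_n -> R) : 'I_n -> int :=
  match pselect (grid delta y) with
  | left h => proj1_sig (cid h)
  | right _ => fun _ => 0
  end.

Arguments code {R n}.

Lemma codeP (R : realType) n (delta : R) (y : 'I_n -> R) :
  grid delta y -> forall i, y i = delta * (code delta y i)%:~R.
Proof.
rewrite /code; case: pselect => // h _.
by case: (cid h).
Qed.

Arguments codeP {R n delta y}.

Theorem theorem3 (R : realType) (n : nat) (delta : R) (hdelta : 0 < delta)
    (w : ('I_n -> R) -> ('I_n -> R)) (C : set ('I_n -> R))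
    (hw : forall x, grid delta x -> grid delta (w x))
    (hCgrid : C `<=` grid delta) (hC0 : C !=set0) (hCb : bounded_set C)
    (hwC : forall x, C x -> C (w x)) :
  absorbing w C (absorbing_inter w C).
Proof.
have iterC : forall x k, C x -> C (iter k w x).
  by move=> x; elim=> //= k IH /IH /hwC.
have Cabs : absorbing w C C.
  split=> //; split=> // x Cx; exists 0%N => i _; exact: iterC.
have evper : forall x, C x -> exists N p, (0 < p)%N /\
    iter (p + N) w x = iter N w x.
  move=> x Cx.
  case: hCb => M hM.
  pose K : nat := `|Num.ceil (M / delta)|%N.
  have hK : forall y, C y -> forall i, `|code delta y i| <= K%:Z.
    move=> y Cy i.
    have e := codeP (hCgrid _ Cy) i.
    have h1 := hM _ Cy i.
    rewrite e normrM (gtr0_norm hdelta) in h1.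
    have h2 : `|code delta y i|%:~R <= M / delta :> R.
      rewrite ler_pdivlMr // mulrC intr_norm.
      idtac.
      exact: h1.
    have h3 := le_trans h2 (ceil_ge _).
    rewrite ler_int in h3.
    apply: (le_trans h3); rewrite /K abszE; exact: ler_norm.
  pose enc (y : 'I_n -> R) : {ffun 'I_n -> 'I_(K.*2.+1)} :=
    [ffun i => inord (absz (code delta y i + K%:Z))].
  have encinj : forall y z, C y -> C z -> enc y = enc z -> y = z.
    move=> y z Cy Cz he; apply: funext => i.
    have hi : enc y i = enc z i by rewrite he.
    move/(congr1 val): hi; rewrite /enc /= !ffunE.
    have := hK _ Cy i; have := hK _ Cz i => hz hy.
    rewrite !inordK; try lia.
    move=> habs.
    have hc : code delta y i = code delta z i by lia.
    by rewrite (codeP (hCgrid _ Cy)) (codeP (hCgrid _ Cz)) hc.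
  have [i [j [hij he]]] := pigeon _ (fun k => enc (iter k w x)).
  have eq := encinj _ _ (iterC _ _ Cx) (iterC _ _ Cx) he.
  exists i, (j - i)%N; split; first by rewrite subn_gt0.
  by rewrite subnK ?(ltnW hij).
have perin : forall y p, C y -> (0 < p)%N -> iter p w y = y ->
    absorbing_inter w C y.
  move=> y p Cy hp hy L [_ [_ hL]].
  case: (hL y Cy) => N hN.
  rewrite -(iter_period _ _ _ _ hy N); apply: hN.
  by rewrite -{1}(muln1 N) leq_mul2l hp orbT.
have ev : forall x, C x -> exists N, forall i, (N <= i)%N ->
    absorbing_inter w C (iter i w x).
  move=> x Cx; case: (evper x Cx) => N [p [hp he]].
  exists N => i hi.
  apply: (perin _ p (iterC _ _ Cx) hp).
  rewrite (_ : iter p w (iter i w x) = iter (i - N) w (iter (p + N) w x)); last by rewrite -!iterD; congr iter; lia.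
  by rewrite he -iterD subnK.
split; first by move=> y hy; apply: hy.
split; last exact: ev.
case: hC0 => x Cx; case: (ev x Cx) => N hN.
by exists (iter N w x); apply: hN.
Qed.
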